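(* Let $f\in\mathbb{K}_C[[\underline{x}]][y]$ be a free polynomial of degree $n$ with characteristic exponents $m_1<\dots<m_h$, and let $e_i$, $r_i$ be its $e$- and $r$-sequences. Then for all $i\in\{1,\dots,h\}$, $e_ir_i\in(n\mathbb{Z})^e+\sum_{j=1}^{i-1}r_j\mathbb{Z}$, and $\alpha r_i\notin(n\mathbb{Z})^e+\sum_{j=1}^{i-1}r_j\mathbb{Z}$ for all integers $1\le\alpha<e_i$.
   Context: $\mathbb{K}$ is an algebraically closed field of characteristic $0$, $\underline{x}=(x_1,\dots,x_e)$. $C\subseteq\mathbb{R}^e$ is a line free cone (nonnegative real combinations of finitely many vectors of $\mathbb{Q}^e$, with $v\in C\setminus\{0\}\Rightarrow -v\notin C$). $\mathbb{K}_C[[\underline{x}]]$ is the ring of formal series with exponents in $C\cap\mathbb{Z}^e$; $\mathbb{K}_C[[\underline{x}^{1/N}]]$ the ring of series $\sum a_p\underline{x}^{p/N}$, $p\in\mathbb{Z}^e$, $p/N\in C$. Fix a total additive order $\le$ on $\mathbb{Z}^e$ compatible with $C$, extended to $\mathbb{Q}^e$ by clearing denominators; $O(z)$ is the $\le$-least exponent of a nonzero series $z$. A monic $g\in\mathbb{K}_C[[\underline{x}]][y]$ of degree $N$ is free if irreducible in $\mathbb{K}_C[[\underline{x}]][y]$ with a root in $\mathbb{K}_C[[\underline{x}^{1/N}]]$. For free $f$ of degree $n$ with roots $y_1,\dots,y_n$ (all in $\mathbb{K}_C[[\underline{x}^{1/n}]]$), the characteristic exponents are the $m\in\mathbb{Z}^e$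 with $m/n=O(y_i-y_j)$ for some $y_i\ne y_j$, listed $m_1<\dots<m_h$. Sequences: $D_1=n^e$, $D_{i+1}=$ gcd of the $e\times e$ minors of $(nI_e,m_1^T,\dots,m_i^T)$ ($1\le i\le h$); $e_i=D_i/D_{i+1}$; $r_1=m_1$ and $r_i=e_{i-1}r_{i-1}+m_i-m_{i-1}$ for $2\le i\le h$. *)

(* Defs.v *)
From HB Require Import structures.
From mathcomp Require Import all_boot all_order all_algebra.
From mathcomp Require Import boolp classical_sets fsbigop.
Set Implicit Arguments. Unset Strict Implicit. Unset Printing Implicit Defensive.
Import Order.TTheory GRing.Theory Num.Theory.
Local Open Scope ring_scope.

Notation expo e := 'rV[int]_e.

Definition inConeQ (e : nat) (gens : seq 'rV[rat]_e) (v : 'rV[rat]_e) : Prop :=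
  exists lam : 'I_(size gens) -> rat,
    (forall k, 0 <= lam k) /\ v = \sum_(k < size gens) lam k *: gens`_k.

Definition inCone (e : nat) (gens : seq 'rV[rat]_e) (p : expo e) : Prop :=
  inConeQ gens (map_mx (fun x : int => x%:~R) p).

Definition line_free (e : nat) (gens : seq 'rV[rat]_e) : Prop :=
  forall v, inConeQ gens v -> v != 0 -> ~ inConeQ gens (- v).

(** An element of
    K_C[[x]] is a series supported in C ∩ Z^e (coefficient of x^p); an element
    of K_C[[x^{1/N}]] is a series supported in C ∩ Z^e read as the coefficient
    of x^{p/N} (p/N ∈ C iff p ∈ C since C is a cone). *)
Definition series (e : nat) (K : Type) := expo e -> K.

Section Series.
Variables (e : nat) (K : fieldType) (gens : seq 'rV[rat]_e).

Definition supported (a : series e K) : Prop :=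
  forall p, a p != 0 -> inCone gens p.

Definition szero : series e K := fun _ => 0.
Definition sone : series e K := fun p => if p == 0 then 1 else 0.
Definition ssub (a b : series e K) : series e K := fun p => a p - b p.

(* Cauchy product; the sum is finitely supported for series supported in a
   line-free cone. *)
Definition smul (a b : series e K) : series e K :=
  fun p => (\sum_(q \in [set: expo e]) a q * b (p - q))%R.

Definition spow (z : series e K) (k : nat) : series e K := iter k (smul z) sone.

(* The embedding K_C[[x]] -> K_C[[x^{1/N}]]: x^p |-> x^{(N p)/N}. *)
Definition sembed (N : nat) (a : series e K) : series e K :=
  fun p => if [forall j, (N%:Z %| p ord0 j)%Z]
           then a (\row_j ((p ord0 j) %/ N%:Z)%Z) else 0.

(** Polynomials in y with series coefficients: list of coefficients
    (constant term first). *)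
Definition pcoef (f : seq (series e K)) (k : nat) : series e K := nth szero f k.

Definition poly_supported (f : seq (series e K)) : Prop :=
  forall k, supported (pcoef f k).

Definition pmul_eq (f g h : seq (series e K)) : Prop :=
  forall k p, pcoef f k p = (\sum_(i < k.+1) smul (pcoef g i) (pcoef h (k - i)) p)%R.

Definition pzero (f : seq (series e K)) : Prop := forall k p, pcoef f k p = 0.

Definition punit (g : seq (series e K)) : Prop :=
  poly_supported g /\
  exists g', poly_supported g' /\ pmul_eq [:: sone] g g'.

Definition pirreducible (f : seq (series e K)) : Prop :=
  poly_supported f /\ ~ pzero f /\ ~ punit f /\
  forall g h, poly_supported g -> poly_supported h -> pmul_eq f g h ->
    punit g \/ punit h.

Definition pmonic (N : nat) (f : seq (series e K)) : Prop :=
  size f = N.+1 /\ forall p, pcoef f N p = sone p.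

Definition proot (N : nat) (f : seq (series e K)) (z : series e K) : Prop :=
  supported z /\
  forall p, (\sum_(k < size f) smul (sembed N (pcoef f k)) (spow z k) p)%R = 0.

Definition free_poly (N : nat) (f : seq (series e K)) : Prop :=
  poly_supported f /\ pmonic N f /\ pirreducible f /\ exists z, proot N f z.

(** m is a characteristic exponent of f (degree n): m/n = O(y_i - y_j) for two
    distinct roots y_i, y_j in K_C[[x^{1/n}]], w.r.t. the order [le]. *)
Definition char_exp (le : rel (expo e)) (n : nat) (f : seq (series e K))
    (m : expo e) : Prop :=
  exists y1 y2, proot n f y1 /\ proot n f y2 /\ y1 <> y2 /\
    ssub y1 y2 m != 0 /\ forall q, ssub y1 y2 q != 0 -> le m q.
End Series.

Definition compatible_order (e : nat) (gens : seq 'rV[rat]_e)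
    (le : rel (expo e)) : Prop :=
  [/\ reflexive le, antisymmetric le, transitive le & total le] /\
  (forall a b c, le a b -> le (a + c) (b + c)) /\
  (forall p, inCone gens p -> le 0 p).

(** The sequences attached to n and the characteristic exponents
    ms = [m_1; ...; m_h] (0-indexed: ms`_i = m_{i+1}). *)
Section Sequences.
Variables (e n : nat) (ms : seq (expo e)).

Definition charmx (i : nat) : 'M[int]_(e, e + i) :=
  row_mx (n%:Z)%:M (\matrix_(r < e, c < i) (ms`_c) ord0 r).

(* Dseq i = D_{i+1} = gcd of the e x e minors of charmx i (so Dseq 0 = n^e) *)
Definition Dseq (i : nat) : nat :=
  \big[gcdn/0%N]_(s : {ffun 'I_e -> 'I_(e + i)}) absz (\det (colsub s (charmx i))).

(* eseq i = e_{i+1} = D_{i+1} / D_{i+2} *)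
Definition eseq (i : nat) : nat := (Dseq i %/ Dseq i.+1)%N.

(* rseq i = r_{i+1} *)
Fixpoint rseq (i : nat) : expo e :=
  match i with
  | 0 => ms`_0
  | i'.+1 => rseq i' *+ eseq i' + ms`_i - ms`_i'
  end.

Definition in_lattice (k : nat) (v : expo e) : Prop :=
  exists (u : expo e) (c : 'I_k -> int),
    v = u *+ n + \sum_(j < k) rseq j *~ c j.
End Sequences.

(* Main.v *)
Require Import Defs.
From HB Require Import structures.
From mathcomp Require Import all_boot all_order all_algebra all_fingroup.
Import Order.TTheory GRing.Theory Num.Theory.
Set Implicit Arguments. Unset Strict Implicit. Unset Printing Implicit Defensive.
Local Open Scope ring_scope.

Lemma det_mul_expand (e N : nat) (A : 'M[int]_(e, N)) (X : 'M[int]_(N, e)) :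
  \det (A *m X) = \sum_(f : {ffun 'I_e -> 'I_N})
     (\prod_i X (f i) i) * \det (colsub f A).
Proof.
transitivity (\sum_(s : 'S_e) \sum_(f : {ffun 'I_e -> 'I_N})
   (-1) ^+ s * \prod_i (A (s i) (f i) * X (f i) i)).
  rewrite -det_tr /determinant; apply: eq_bigr => s _.
  rewrite (eq_bigr (fun i => \sum_k A (s i) k * X k i)); last first.
    by move=> i _; rewrite !mxE.
  by rewrite bigA_distr_bigA big_distrr.
rewrite exchange_big /=; apply: eq_bigr => f _.
rewrite -(det_tr (colsub f A)) /determinant big_distrr /=; apply: eq_bigr => s _.
have -> : \prod_i (colsub f A)^T i (s i) = \prod_i A (s i) (f i).
  by apply: eq_bigr => i _; rewrite !mxE.
by rewrite big_split /= mulrA mulrC.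
Qed.


Definition Dm (e N : nat) (A : 'M[int]_(e, N)) : nat :=
  \big[gcdn/0%N]_(s : {ffun 'I_e -> 'I_N}) absz (\det (colsub s A)).

Definition Lat (e N : nat) (A : 'M[int]_(e, N)) (v : 'cV[int]_e) : Prop :=
  exists x : 'cV_N, v = A *m x.

Section Gen.
Variables (e : nat).

Lemma Dm_dvd N (A : 'M[int]_(e, N)) (s : {ffun 'I_e -> 'I_N}) : dvdn (Dm A) (absz (\det (colsub s A))).
Proof. by rewrite /Dm; apply: (biggcdn_inf s). Qed.

Lemma DmP N (A : 'M[int]_(e, N)) d :
  (forall s : {ffun 'I_e -> 'I_N}, dvdn d (absz (\det (colsub s A)))) -> dvdn d (Dm A).
Proof. by move=> H; apply/dvdn_biggcdP => s _; apply: H. Qed.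

Lemma Dm_mul N (A : 'M[int]_(e, N)) X : dvdn (Dm A) (absz (\det (A *m X))).
Proof.
have : ((Dm A)%:Z %| \det (A *m X))%Z.
  rewrite det_mul_expand; apply: (big_ind (fun x => (Dm A)%:Z %| x)%Z).
  - exact: dvdz0.
  - by move=> x y; apply: rpredD.
  by move=> f _; apply: dvdz_mull; rewrite dvdzE absz_nat; apply: Dm_dvd.
by rewrite dvdzE absz_nat.
Qed.

Lemma Dm_mulr N N2 (A : 'M[int]_(e, N)) (X : 'M[int]_(N, N2)) : dvdn (Dm A) (Dm (A *m X)).
Proof. by apply: DmP => s; rewrite -mulmx_colsub; apply: Dm_mul. Qed.

Lemma Dm_mull N (L : 'M[int]_e) (A : 'M[int]_(e, N)) : dvdn (Dm A) (Dm (L *m A)).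
Proof.
apply: DmP => s; rewrite -mulmx_colsub det_mulmx abszM.
by apply: dvdn_mull; apply: Dm_dvd.
Qed.

Lemma Dm_colsub N N2 (A : 'M[int]_(e, N)) (g : 'I_N2 -> 'I_N) : dvdn (Dm A) (Dm (colsub g A)).
Proof.
apply: DmP => s; rewrite -colsub_comp.
have -> : colsub (g \o s) A = colsub [ffun i => g (s i)] A.
  by apply/matrixP => i j; rewrite !mxE ffunE.
exact: Dm_dvd.
Qed.

Lemma Lat0 N (A : 'M[int]_(e, N)) : Lat A 0.
Proof. by exists 0; rewrite mulmx0. Qed.

Lemma LatD N (A : 'M[int]_(e, N)) u v : Lat A u -> Lat A v -> Lat A (u + v).
Proof. by move=> [x ->] [y ->]; exists (x + y); rewrite mulmxDr. Qed.

Lemma LatZ N (A : 'M[int]_(e, N)) a u : Lat A u -> Lat A (a *: u).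
Proof. by move=> [x ->]; exists (a *: x); rewrite scalemxAr. Qed.

Lemma Lat_sum N (A : 'M[int]_(e, N)) (I : finType) (F : I -> 'cV_e) :
  (forall i, Lat A (F i)) -> Lat A (\sum_i F i).
Proof.
move=> H; apply: (big_ind (Lat A)); [exact: Lat0 | exact: LatD | by move=> i _].
Qed.

Lemma Lat_mull N (A : 'M[int]_(e, N)) (L : 'M[int]_e) u : Lat A u -> Lat (L *m A) (L *m u).
Proof. by move=> [x ->]; exists x; rewrite mulmxA. Qed.

Lemma Lat_mulr N N2 (A : 'M[int]_(e, N)) (X : 'M[int]_(N, N2)) u :
  Lat (A *m X) u -> Lat A u.
Proof. by move=> [x ->]; exists (X *m x); rewrite mulmxA. Qed.

Lemma Lat_row N (A : 'M[int]_(e, N)) (m : 'cV_e) u : Lat A u -> Lat (row_mx A m) u.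
Proof. by move=> [x ->]; exists (col_mx x 0); rewrite mul_row_col mulmx0 addr0. Qed.

Lemma Lat_rowm N (A : 'M[int]_(e, N)) (m : 'cV_e) : Lat (row_mx A m) m.
Proof.
by exists (col_mx 0 1); rewrite mul_row_col mulmx0 add0r mulmx1.
Qed.

Lemma Lat_col N (A : 'M[int]_(e, N)) c : Lat A (col c A).
Proof. by exists (delta_mx c 0); rewrite colE. Qed.

Lemma LG N (A : 'M[int]_(e, N)) (M : 'M[int]_e) :
  (forall l, Lat A (col l M)) -> dvdn (Dm A) (absz (\det M)).
Proof.
move=> H; have [x Hx] := fin_all_exists H.
have -> : M = A *m (\matrix_(k, l) x l k 0).
  apply/matrixP => i l; have := congr1 (fun v : 'cV_e => v i 0) (Hx l).
  by rewrite !mxE => ->; apply: eq_bigr => k _; rewrite !mxE.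
exact: Dm_mul.
Qed.


Lemma Dm_row_dvd N (A : 'M[int]_(e, N)) (m : 'cV_e) : dvdn (Dm (row_mx A m)) (Dm A).
Proof.
have := Dm_colsub (row_mx A m) (lshift 1).
by rewrite -lsubmxEsub row_mxKl.
Qed.

Lemma F2 N (A : 'M[int]_(e, N)) (m : 'cV_e) (k : nat) :
  Lat A (m *+ k) -> dvdn (Dm A) (k * Dm (row_mx A m)).
Proof.
move=> Hk.
have -> : (k * Dm (row_mx A m) = \big[gcdn/0%N]_(s : {ffun 'I_e -> 'I_(N + 1)})
    (k * absz (\det (colsub s (row_mx A m)))))%N.
  by rewrite /Dm (big_morph (muln k) (muln_gcdr k) (muln0 k)).
apply/dvdn_biggcdP => s _ /=.
pose last := rshift N (ord0 : 'I_1).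
have colL : forall c, s c != last -> Lat A (col c (colsub s (row_mx A m))).
  move=> c; rewrite col_colsub; case: (splitP (s c)) => [c' Hc|c' Hc] Hne.
    have -> : s c = lshift 1 c' by apply: val_inj.
    have -> : col (lshift 1 c') (row_mx A m) = col c' A.
      by apply/matrixP => i z; rewrite !mxE (unsplitK (inl c')).
    exact: Lat_col.
  by case/eqP: Hne; apply: val_inj; rewrite /= Hc (ord1 c').
have colm : forall c, s c == last -> col c (colsub s (row_mx A m)) = m.
  move=> c /eqP Hc; apply/matrixP => i z; rewrite !mxE Hc (unsplitK (inr ord0)). by rewrite (ord1 z).
case: (pickP (fun j => s j == last)) => [j Hj | Hn]; last first.
  apply: dvdn_mull; apply: LG => c; apply: colL; by rewrite Hn.
case: (pickP (fun l => (l != j) && (s l == last))) => [l /andP [Hlj Hl] | Hn2].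
  have -> : \det (colsub s (row_mx A m)) = 0.
    rewrite -det_tr; apply: (determinant_alternate Hlj) => r.
    by rewrite !mxE (eqP Hl) (eqP Hj).
  by rewrite muln0 dvdn0.
pose M := colsub s (row_mx A m) *m diag_mx (\row_c (if c == j then k%:Z else 1)).
have HM : \det M = \det (colsub s (row_mx A m)) * k%:Z.
  rewrite det_mulmx det_diag (bigD1 j) //= big1 => [|c Hc]; rewrite !mxE.
    by rewrite eqxx mulr1.
  by rewrite (negPf Hc).
have := @LG _ A M.
rewrite HM abszM absz_nat mulnC; apply => c.
have -> : col c M = (if c == j then k%:Z else 1) *: col c (colsub s (row_mx A m)).
  by rewrite /M mul_mx_diag; apply/matrixP => i z; rewrite !mxE mulrC.
case: eqP => [->|/eqP Hcj].
  by rewrite colm // -natz scaler_nat.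
rewrite scale1r; apply: colL.
by move: (Hn2 c); rewrite Hcj /= => ->.
Qed.


Lemma F3 N (A : 'M[int]_(e, N)) (m : 'cV_e) :
  Lat A (m *+ (Dm A %/ Dm (row_mx A m))%N).
Proof.
have [DA0|DAn0] := eqVneq (Dm A) 0%N.
  by rewrite DA0 div0n mulr0n; apply: Lat0.
have [L Lu [R Ru [d _ HA]]] := int_Smith_normal_form A.
set S := \matrix_(i, j) _ in HA.
pose s (i : 'I_e) : int := d`_i *+ (i < N)%N.
have KS : forall c : 'I_e, Lat S (s c *: delta_mx c 0).
  move=> c; case: (ltnP c N) => cN; last first.
    by rewrite /s ltnNge cN /= mulr0n scale0r; apply: Lat0.
  exists (delta_mx (Ordinal cN) 0); rewrite -colE; apply/matrixP => i z.
  rewrite !mxE /s cN (ord1 z) /= andbT.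
  have [->|Hic] := eqVneq i c; first by rewrite eqxx mulr1.
  have Hic' : (i == c :> nat) = false by apply/negP => /eqP H; case/eqP: Hic; apply: val_inj.
  by rewrite Hic' mulr0 mulr0n.
have SR : forall v, Lat S v -> Lat A (L *m v).
  move=> v [x ->]; exists (invmx R *m x).
  by rewrite HA -!mulmxA (mulKVmx Ru).
pose P := \prod_i s i.
have PD : (P %| (Dm A)%:Z)%Z.
  pose E := \matrix_(i < e, j < N) ((i == j :> nat)%:R : int).
  have SE : S = diag_mx (\row_i s i) *m E.
    apply/matrixP => i j; rewrite mul_diag_mx !mxE /s.
    have [Hij|Hij] := boolP (i == j :> nat).
      by rewrite mulr1 (eqP Hij) ltn_ord.
    by rewrite mulr0n mulr0.
  have H1 : dvdn `|P| (Dm S).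
    apply: DmP => t; rewrite SE -mulmx_colsub det_mulmx abszM det_diag.
    apply: dvdn_mulr.
    suff -> : \prod_i (\row_i0 s i0) 0 i = P by [].
    by apply: eq_bigr => i _; rewrite mxE.
  change (dvdn `|P| `|(Dm A)%:Z|); rewrite absz_nat; apply: (dvdn_trans H1).
  rewrite HA; apply: (dvdn_trans (Dm_mull L S)); exact: Dm_mulr.
pose dp := Dm (row_mx A m).
have dpD : dvdn dp (Dm A) by apply: Dm_row_dvd.
have dp0 : dp != 0%N by apply: contra_neq DAn0 => H; move: dpD; rewrite H dvd0n => /eqP.
pose q := (Dm A %/ dp)%N.
have qdp : (Dm A = q * dp)%N by rewrite divnK.
pose w := invmx L *m m.
have Hw : m = L *m w by rewrite mulKVmx.
pose B := row_mx (S *m R) w.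
have HB : B = invmx L *m row_mx A m.
  by rewrite mul_mx_row HA -!mulmxA (mulKmx Lu).
have dpB : dvdn dp (Dm B) by rewrite HB; apply: Dm_mull.
have LatSB : forall v, Lat S v -> Lat B v.
  move=> v [x ->]; apply: Lat_row; exists (invmx R *m x).
  by rewrite -mulmxA (mulKVmx Ru).
have key : forall j : 'I_e, (s j %| q%:Z * w j ord0)%Z.
  move=> j.
  pose M := \matrix_(r, c) (if c == j then w r 0 else s c *+ (r == c)).
  have colM : forall c, Lat B (col c M).
    move=> c; have [->|Hcj] := eqVneq c j.
      have -> : col j M = w by apply/matrixP => r z; rewrite !mxE eqxx (ord1 z).
      exact: Lat_rowm.
    have -> : col c M = s c *: delta_mx c 0.
      by apply/matrixP => r z; rewrite !mxE (negPf Hcj) (ord1 z) eqxx andbT mulr_natr.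
    by apply: LatSB.
  have detM : \det M = w j ord0 * \prod_(a < e.-1) s (lift j a).
    rewrite (expand_det_row _ j) (bigD1 j) //= big1 ?addr0 => [|c Hcj]; last first.
      by rewrite !mxE (negPf Hcj) eq_sym (negPf Hcj) mulr0n mul0r.
    rewrite !mxE eqxx /cofactor.
    have -> : row' j (col' j M) = diag_mx (\row_a s (lift j a)).
      apply/matrixP => a b; rewrite !mxE eq_sym (negPf (neq_lift j b)) (inj_eq (@lift_inj _ j)).
      by have [->|] := eqVneq a b.
    rewrite det_diag -signr_odd addnn odd_double expr0 mul1r.
    by congr (_ * _); apply: eq_bigr => i _; rewrite mxE.
  have Pj : P = s j * \prod_(a < e.-1) s (lift j a) by rewrite /P (bigD1_ord j).
  have dvM : (dp%:Z %| w j ord0 * \prod_(a < e.-1) s (lift j a))%Z.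
    rewrite -detM; change (dvdn `|dp%:Z| `|\det M|); rewrite absz_nat; apply: (dvdn_trans dpB); apply: LG => c; exact: colM.
  case/dvdzP: dvM => c Hc; case/dvdzP: PD => t Ht.
  apply/dvdzP; exists (t * c).
  have dpz : dp%:Z != 0 by rewrite eqz_nat.
  apply: (mulIf dpz).
  rewrite mulrAC -PoszM -qdp Ht Pj -mulrA -mulrA.
  set Q := \prod_(a < e.-1) s (lift j a) in Hc *.
  rewrite -(mulrA (s j)) (mulrC Q) Hc.
  by rewrite !mulrA [t * s j * c]mulrAC.
have -> : m *+ q = L *m (w *+ q) by rewrite Hw -!scaler_nat scalemxAr.
apply: SR.
rewrite (matrix_sum_delta (w *+ q)); apply: Lat_sum => j; apply: Lat_sum => z.
rewrite (ord1 z) mulmxnE -mulr_natl.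
have [k Hk] := dvdzP (key j).
rewrite natz Hk -scalerA; apply: LatZ; exact: KS.
Qed.

End Gen.

Section Main.
Variables (e n : nat) (ms : seq (expo e)).

Lemma trD (u v : expo e) : (u + v)^T = u^T + v^T.
Proof. by apply/matrixP => i j; rewrite !mxE. Qed.
Lemma trN (u : expo e) : (- u)^T = - u^T.
Proof. by apply/matrixP => i j; rewrite !mxE. Qed.
Lemma trMn (u : expo e) k : (u *+ k)^T = u^T *+ k.
Proof. by apply/matrixP => i j; rewrite mulmxnE !mxE mulmxnE. Qed.
Lemma trZ (u : expo e) (z : int) : (u *~ z)^T = z *: u^T.
Proof. by rewrite -scaler_int intz; apply/matrixP => i j; rewrite !mxE. Qed.

Definition LMt k (v : expo e) := Lat (charmx n ms k) v^T.

Lemma LMtD k u v : LMt k u -> LMt k v -> LMt k (u + v).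
Proof. by rewrite /LMt trD; apply: LatD. Qed.
Lemma LMtZ k u z : LMt k u -> LMt k (u *~ z).
Proof. by rewrite /LMt trZ; apply: LatZ. Qed.
Lemma LMtN k u : LMt k u -> LMt k (- u).
Proof. by move=> H; rewrite -mulrN1z; apply: LMtZ. Qed.
Lemma LMtB k u v : LMt k u -> LMt k v -> LMt k (u - v).
Proof. by move=> Hu Hv; apply: LMtD => //; apply: LMtN. Qed.
Lemma LMtMn k u a : LMt k u -> LMt k (u *+ a).
Proof. by move=> H; rewrite pmulrn; apply: LMtZ. Qed.

Lemma charmxE i (r : 'I_e) (c : 'I_(e + i)) :
  charmx n ms i r c = if (c < e)%N then n%:Z *+ (r == c :> nat) else (ms`_(c - e)) ord0 r.
Proof.
rewrite /charmx mxE; case: splitP => [k Hk|k Hk]; rewrite !mxE Hk.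
  by [].
by rewrite addKn.
Qed.

Lemma eqn_i i : (e + i.+1 = e + i + 1)%N.
Proof. by rewrite addnS addn1. Qed.

Lemma charmxS i :
  charmx n ms i.+1 = colsub (cast_ord (eqn_i i)) (row_mx (charmx n ms i) (ms`_i)^T).
Proof.
apply/matrixP => r c; rewrite charmxE mxE mxE.
case: (splitP (cast_ord (eqn_i i) c)) => [k Hk|k Hk]; rewrite /= in Hk.
  by rewrite charmxE -Hk.
have c_eq : (c : nat) = e + i by rewrite Hk (ord1 k) addn0.
by rewrite mxE c_eq ltnNge leq_addr /= addKn (ord1 k).
Qed.

Lemma rowmxS i :
  row_mx (charmx n ms i) (ms`_i)^T = colsub (cast_ord (esym (eqn_i i))) (charmx n ms i.+1).
Proof.
rewrite charmxS -colsub_comp; apply/matrixP => r c; rewrite !mxE /=.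
by rewrite cast_ordKV.
Qed.

Lemma Lat_colsub N N2 (X : 'M[int]_(e, N)) (g : 'I_N2 -> 'I_N) v :
  Lat (colsub g X) v -> Lat X v.
Proof.
have -> : colsub g X = X *m colsub g 1%:M by rewrite mulmx_colsub mulmx1.
exact: Lat_mulr.
Qed.

Lemma LMtS k v : LMt k v -> LMt k.+1 v.
Proof.
move=> H; rewrite /LMt; apply: (@Lat_colsub _ _ _ (cast_ord (esym (eqn_i k)))).
by rewrite -rowmxS; apply: Lat_row.
Qed.

Lemma LMtm k : LMt k.+1 ms`_k.
Proof.
rewrite /LMt; apply: (@Lat_colsub _ _ _ (cast_ord (esym (eqn_i k)))).
by rewrite -rowmxS; apply: Lat_rowm.
Qed.

Lemma DseqS i : Dseq n ms i.+1 = Dm (row_mx (charmx n ms i) (ms`_i)^T).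
Proof.
apply/eqP; rewrite eqn_dvd; apply/andP; split.
  rewrite rowmxS; exact: Dm_colsub.
rewrite -[Dseq _ _ _]/(Dm (charmx n ms i.+1)) charmxS; exact: Dm_colsub.
Qed.

Lemma LMt_e i : LMt i (ms`_i *+ eseq n ms i).
Proof.
rewrite /LMt trMn /eseq DseqS; exact: F3.
Qed.

Lemma LMt_F2 i a : LMt i (ms`_i *+ a) -> dvdn (Dseq n ms i) (a * Dseq n ms i.+1).
Proof.
rewrite /LMt trMn DseqS; exact: F2.
Qed.


Definition Lspan (g : nat -> expo e) k (v : expo e) :=
  exists (u : expo e) (c : 'I_k -> int), v = u *+ n + \sum_(j < k) g j *~ c j.

Lemma Lspan0 g1 g2 v : Lspan g1 0 v -> Lspan g2 0 v.
Proof. by move=> [u [c ->]]; exists u, c; rewrite !big_ord0. Qed.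

Lemma LspanS g k v : Lspan g k.+1 v <-> exists t, Lspan g k (v - g k *~ t).
Proof.
split.
  move=> [u [c ->]]; exists (c ord_max), u, (fun j => c (widen_ord (leqnSn k) j)).
  by rewrite big_ord_recr /= addrA addrK.
move=> [t [u [c Hv]]]; exists u, (fun j => if unlift ord_max j is Some j' then c j' else t).
rewrite big_ord_recr /= unlift_none.
have -> : \sum_(j < k) g (widen_ord (leqnSn k) j) *~
    (if unlift ord_max (widen_ord (leqnSn k) j) is Some j' then c j' else t)
    = \sum_(j < k) g j *~ c j.
  apply: eq_bigr => j _.
  have -> : widen_ord (leqnSn k) j = lift ord_max j by apply: val_inj; rewrite [RHS]lift_max.
  by rewrite (liftK ord_max j) lift_max.
by rewrite addrA -Hv subrK.
Qed.

Lemma trsum k (F : 'I_k -> expo e) : (\sum_j F j)^T = \sum_j (F j)^T.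
Proof.
elim/big_ind2: _ => //; first by rewrite trmx0.
by move=> x1 y1 x2 y2 <- <-; rewrite trD.
Qed.

Lemma helper k (u : expo e) (c : 'I_k -> int) :
  (u *+ n + \sum_(j < k) ms`_j *~ c j)^T = charmx n ms k *m col_mx u^T (\col_j c j).
Proof.
rewrite trD trMn trsum /charmx mul_row_col mul_scalar_mx.
apply/matrixP => r z; rewrite (ord1 z) !mxE mulmxnE !mxE summxE.
rewrite -mulr_natl natz; congr (_ + _); apply: eq_bigr => j _.
by rewrite trZ !mxE mulrC.
Qed.

Lemma LM_Lat k v : Lspan (fun j => ms`_j) k v <-> LMt k v.
Proof.
split.
  move=> [u [c ->]]; rewrite /LMt helper; exists (col_mx u^T (\col_j c j)).
  by [].
move=> [x Hx]; exists (usubmx x)^T, (fun j => dsubmx x j ord0).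
apply: trmx_inj; rewrite helper trmxK Hx; congr (_ *m _).
rewrite -[x in LHS]vsubmxK; congr col_mx.
by apply/matrixP => a b; rewrite !mxE (ord1 b).
Qed.

Lemma Hrm j : LMt j (rseq n ms j - ms`_j).
Proof.
elim: j => [|j IH] /=.
  rewrite subrr /LMt trmx0; exact: Lat0.
have -> : rseq n ms j *+ eseq n ms j + ms`_j.+1 - ms`_j - ms`_j.+1
    = (rseq n ms j - ms`_j) *+ eseq n ms j + (ms`_j *+ eseq n ms j - ms`_j).
  rewrite mulrnBl -!addrA; congr (_ + _).
  by rewrite addrCA subrr addr0 addKr.
apply: LMtD; first by apply: LMtMn; apply: LMtS.
apply: LMtB; [apply: LMtS; exact: LMt_e | exact: LMtm].
Qed.

Lemma equiv k v : in_lattice n ms k v <-> LMt k v.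
Proof.
elim: k v => [|k IH] v.
  change (Lspan (rseq n ms) 0 v <-> LMt 0 v).
  split => H; first by apply/LM_Lat; apply: Lspan0 H.
  by move/LM_Lat: H; apply: Lspan0.
change (Lspan (rseq n ms) k.+1 v <-> LMt k.+1 v).
rewrite LspanS -LM_Lat LspanS.
split => [[t H]|[t H]]; exists t.
  have H' : LMt k (v - rseq n ms k *~ t) by apply/IH.
  apply/LM_Lat.
  have -> : v - ms`_k *~ t = (v - rseq n ms k *~ t) + (rseq n ms k - ms`_k) *~ t.
    by rewrite mulrzBl addrA subrK.
  by apply: LMtD => //; apply: LMtZ; apply: Hrm.
have H' : LMt k (v - ms`_k *~ t) by apply/LM_Lat.
change (in_lattice n ms k (v - rseq n ms k *~ t)); apply/IH.
have -> : v - rseq n ms k *~ t = (v - ms`_k *~ t) - (rseq n ms k - ms`_k) *~ t.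
  by rewrite mulrzBl opprB addrA subrK.
by apply: LMtB => //; apply: LMtZ; apply: Hrm.
Qed.

End Main.

Unset Implicit Arguments.

Theorem mainTheorem4 (K : closedFieldType) (charK : [pchar K] =i pred0)
  (e : nat) (gens : seq 'rV[rat]_e) (hC : line_free gens)
  (le : rel (expo e)) (hle : compatible_order gens le)
  (n : nat) (f : seq (series e K)) (hf : free_poly gens n f)
  (ms : seq (expo e))
  (hms_sorted : sorted (fun a b => le a b && (a != b)) ms)
  (hms : forall m, m \in ms <-> char_exp gens le n f m) :
  forall i, (i < size ms)%N ->
    in_lattice n ms i (rseq n ms i *+ eseq n ms i) /\
    (forall alpha : nat, (1 <= alpha)%N -> (alpha < eseq n ms i)%N ->
       ~ in_lattice n ms i (rseq n ms i *+ alpha)).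
Proof.
move=> i _; split.
  apply/equiv.
  have -> : rseq n ms i *+ eseq n ms i
      = (rseq n ms i - ms`_i) *+ eseq n ms i + ms`_i *+ eseq n ms i.
    by rewrite mulrnBl subrK.
  by apply: LMtD; [apply: LMtMn; apply: Hrm | apply: LMt_e].
move=> a a1 aE /equiv H.
have H2 : LMt n ms i (ms`_i *+ a).
  have -> : ms`_i *+ a = rseq n ms i *+ a - (rseq n ms i - ms`_i) *+ a.
    by rewrite mulrnBl opprB addrC subrK.
  by apply: LMtB => //; apply: LMtMn; apply: Hrm.
have := LMt_F2 H2.
have dd : dvdn (Dseq n ms i.+1) (Dseq n ms i) by rewrite DseqS; apply: Dm_row_dvd.
case: (posnP (Dseq n ms i.+1)) => [D0|Dpos].
  by move: aE; rewrite /eseq D0 divn0.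
rewrite -[X in dvdn X _](divnK dd) -/(eseq n ms i) dvdn_pmul2r // => Hd.
by have := dvdn_leq a1 Hd; rewrite leqNgt aE.
Qed.
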